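(* Let $\lambda<0$ and let $p(x;\theta)=(1+\lambda\,\theta\cdot F(x))_+^{1/\lambda}e^{-\varphi(\theta)}$, $\theta\in\Theta\subset\mathbb{R}^d$, be a $\lambda$-exponential family on a state space $\mathcal{X}$ with reference measure $\nu$, satisfying the standing assumptions described in the context. Let $x_1,\ldots,x_n\in\mathcal{S}$ be data points and put $y_i=F(x_i)\in\mathbb{R}^d$. If $\hat\theta\in\Theta$ is a maximum likelihood estimate, i.e. $\hat\theta$ maximizes $$\ell(\theta)=\sum_{i=1}^n\Big(\tfrac{1}{\lambda}\log(1+\lambda\,\theta\cdot y_i)-\varphi(\theta)\Big)$$ over $\Theta$, then $\hat\eta:=\nabla^{(\lambda)}\varphi(\hat\theta)$ satisfies $$\hat\eta=\sum_{i=1}^n w_i(\hat\theta)\,y_i,\qquad w_i(\theta):=\frac{1/(1+\lambda\,\theta\cdot y_i)}{\sum_{j=1}^n 1/(1+\lambda\,\theta\cdot y_j)},\quad i=1,\ldots,n.$$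
   Context: Setting: $\mathcal{X}$ is a state space with reference measure $\nu$, $\lambda\in\mathbb{R}\setminus\{0\}$ is fixed, $F=(F_1,\ldots,F_d):\mathcal{X}\to\mathbb{R}^d$ is a vector of statistics, $z_+=\max\{z,0\}$, and the $\lambda$-exponential family is $p(x;\theta)=(1+\lambda\theta\cdot F(x))_+^{1/\lambda}e^{-\varphi(\theta)}$, where the potential $\varphi(\theta)$ is defined by the normalization $\int_{\mathcal{X}}p(x;\theta)\,d\nu(x)=1$. The $\lambda$-gradient of a differentiable function $f$ is $\nabla^{(\lambda)}f(\theta):=\nabla f(\theta)/(1-\lambda\nabla f(\theta)\cdot\theta)$. The $\lambda$-conjugate of $f$ is $f^{(\lambda)}(y)=\sup_x\{\frac1\lambda\log(1+\lambda x\cdot y)-f(x)\}$. Standing assumptions: $\lambda<0$; $\Theta=\{\theta\in\mathbb{R}^d:\int(1+\lambda\theta\cdot F(x))_+^{1/\lambda}d\nu(x)<\infty\}$ is the natural parameter set; the family satisfies the regularity condition of Wong and Zhang (2022, Condition III.10), under which $\varphi$ is differentiable on $\Theta$ with $1-\lambda\nabla\varphi(\theta)\cdot\theta>0$, the dual potential $\psi(\eta):=\sup_{\theta'\in\Theta}\{\frac1\lambda\log(1+\lambda\theta'\cdot\eta)-\varphi(\theta')\}$ is such that $\frac1\lambda(e^{\lambda\psi}-1)$ is strictly convex on $\Xi$, and $\nabla^{(\lambda)}\varphi:\Theta\to\Xi$ is a diffeomorphism with inverse $\nabla^{(\lambda)}\psi$; moreover the dual parameter set $\Xi:=\nabla^{(\lambda)}\varphi(\Theta)$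 is convex and contains the common support $\mathcal{S}:=\{x\in\mathcal{X}:p(x;\theta)>0\}$ of the family. *)

(* Defs.v *)
From HB Require Import structures.
From mathcomp Require Import all_boot all_order all_algebra.
From mathcomp Require Import all_classical all_reals all_analysis.
Set Implicit Arguments. Unset Strict Implicit. Unset Printing Implicit Defensive.
Import Order.TTheory GRing.Theory Num.Theory.
Import numFieldNormedType.Exports.
Local Open Scope classical_set_scope.
Local Open Scope ring_scope.

Section LambdaExp.
Variable R : realType.

Definition dotp (d : nat) (u v : 'rV[R]_d) : R := \sum_(i < d) u 0 i * v 0 i.

Definition grad (d : nat) (f : 'rV[R]_d -> R) (t : 'rV[R]_d) : 'rV[R]_d :=
  \row_(i < d) ('D_(delta_mx 0 i) f t).

Definition lgrad (lam : R) (d : nat) (f : 'rV[R]_d -> R) (t : 'rV[R]_d) : 'rV[R]_d :=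
  (1 - lam * dotp (grad f t) t)^-1 *: grad f t.

Variables (dX : measure_display) (X : measurableType dX).

(* (1 + lam theta.F(x))_+^{1/lam}   (powR 0 r = 0 for r <> 0) *)
Definition lkernel (lam : R) (d : nat) (F : X -> 'rV[R]_d) (t : 'rV[R]_d) (x : X) : R :=
  powR (Num.max (1 + lam * dotp t (F x)) 0) lam^-1.

Definition natparam (lam : R) (d : nat) (nu : {measure set X -> \bar R})
  (F : X -> 'rV[R]_d) : set 'rV[R]_d :=
  [set t | (\int[nu]_x (lkernel lam F t x)%:E < +oo)%E].

(* potential: normalisation  int p(x;theta) dnu = 1 *)
Definition potential (lam : R) (d : nat) (nu : {measure set X -> \bar R})
  (F : X -> 'rV[R]_d) (t : 'rV[R]_d) : R :=
  ln (fine (\int[nu]_x (lkernel lam F t x)%:E)).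

Definition ldensity (lam : R) (d : nat) (nu : {measure set X -> \bar R})
  (F : X -> 'rV[R]_d) (t : 'rV[R]_d) (x : X) : R :=
  lkernel lam F t x * expR (- potential lam nu F t).

Definition lsupport (lam : R) (d : nat) (nu : {measure set X -> \bar R})
  (F : X -> 'rV[R]_d) : set X :=
  [set x | forall t, natparam lam nu F t -> 0 < ldensity lam nu F t x].

(* dual potential psi(eta) = sup_{theta' in Theta} (1/lam log(1+lam theta'.eta) - phi(theta'))
   (terms with 1 + lam theta'.eta <= 0 are -oo and are dropped) *)
Definition dualpot (lam : R) (d : nat) (nu : {measure set X -> \bar R})
  (F : X -> 'rV[R]_d) (e : 'rV[R]_d) : R :=
  sup [set v | exists2 t, (natparam lam nu F t /\ 0 < 1 + lam * dotp t e) &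
        v = lam^-1 * ln (1 + lam * dotp t e) - potential lam nu F t].

Definition dualparam (lam : R) (d : nat) (nu : {measure set X -> \bar R})
  (F : X -> 'rV[R]_d) : set 'rV[R]_d :=
  lgrad lam (potential lam nu F) @` natparam lam nu F.

(* Standing assumptions (consequences of Wong--Zhang Condition III.10) *)
Definition standing_assumptions (lam : R) (d : nat) (nu : {measure set X -> \bar R})
  (F : X -> 'rV[R]_d) : Prop :=
  let Th := natparam lam nu F in
  let phi := potential lam nu F in
  let Xi := dualparam lam nu F in
  let psi := dualpot lam nu F in
  [/\ lam < 0,
      (forall i, measurable_fun setT (fun x => F x 0 i)),
      open Th &
      [/\
      (forall x t1 t2, Th t1 -> Th t2 ->
         (0 < ldensity lam nu F t1 x) = (0 < ldensity lam nu F t2 x)) &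
      [/\ (forall t, Th t -> differentiable phi t /\ 0 < 1 - lam * dotp (grad phi t) t),
      (forall e1 e2 s, Xi e1 -> Xi e2 -> e1 != e2 -> 0 < s < 1 ->
         (expR (lam * psi (s *: e1 + (1 - s) *: e2)) - 1) / lam <
         s * ((expR (lam * psi e1) - 1) / lam) + (1 - s) * ((expR (lam * psi e2) - 1) / lam)),
      (* grad^(lam) phi : Theta -> Xi is a diffeomorphism with inverse grad^(lam) psi *)
      [/\ (forall e, Xi e -> differentiable psi e /\ 0 < 1 - lam * dotp (grad psi e) e),
          (forall t, Th t -> lgrad lam psi (lgrad lam phi t) = t),
          (forall e, Xi e -> Th (lgrad lam psi e) /\ lgrad lam phi (lgrad lam psi e) = e),
          {in Th, continuous (lgrad lam phi)} &
          {in Xi, continuous (lgrad lam psi)}],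
      (forall e1 e2 s, Xi e1 -> Xi e2 -> 0 <= s <= 1 -> Xi (s *: e1 + (1 - s) *: e2)) &
      F @` lsupport lam nu F `<=` Xi]]].

Definition loglik (lam : R) (d n : nat) (nu : {measure set X -> \bar R})
  (F : X -> 'rV[R]_d) (y : 'I_n -> 'rV[R]_d) (t : 'rV[R]_d) : R :=
  \sum_(i < n) (lam^-1 * ln (1 + lam * dotp t (y i)) - potential lam nu F t).

Definition lweight (lam : R) (d n : nat) (y : 'I_n -> 'rV[R]_d) (t : 'rV[R]_d) (i : 'I_n) : R :=
  (1 + lam * dotp t (y i))^-1 / \sum_(j < n) (1 + lam * dotp t (y j))^-1.

End LambdaExp.

(* Main.v *)
Require Import Defs.
From HB Require Import structures.
From mathcomp Require Import all_boot all_order all_algebra.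
From mathcomp Require Import all_classical all_reals all_analysis.
From mathcomp Require Import ring lra.
Import Order.TTheory GRing.Theory Num.Theory.
Import numFieldNormedType.Exports.
Local Open Scope classical_set_scope.
Local Open Scope ring_scope.
Section Aux.
Variable R : realType.

Lemma line_derive (V : normedModType R) (f : V -> R) (a v : V) :
  (derivable f a v <-> derivable (fun h : R => f (h *: v + a)) 0 1) /\
  'D_v f a = 'D_1 (fun h : R => f (h *: v + a)) 0.
Proof.
have E : (fun h : R => h^-1 *: ((f \o shift a) (h *: v) - f a)) =
  (fun h : R => h^-1 *: (((fun h : R => f (h *: v + a)) \o shift 0) (h *: 1)
     - (fun h : R => f (h *: v + a)) 0)).
  by apply/funext => h /=; rewrite addr0 scale0r add0r [h *: 1]mulr1.
by rewrite /derivable /derive E.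
Qed.

Lemma dotp_line d (h : R) (v t y : 'rV[R]_d) :
  dotp (h *: v + t) y = h * dotp v y + dotp t y.
Proof.
rewrite /dotp mulr_sumr -big_split /=; apply: eq_bigr => i _.
by rewrite !mxE mulrDl mulrA.
Qed.

Lemma dotp_delta d (k : 'I_d) (y : 'rV[R]_d) : dotp (delta_mx 0 k) y = y 0 k.
Proof.
rewrite /dotp (bigD1 k) //= big1 ?addr0; first by rewrite mxE !eqxx mul1r.
by move=> i ik; rewrite mxE eqxx /= (negbTE ik) mul0r.
Qed.

Lemma dotp_suml d n (a : 'I_n -> R) (y : 'I_n -> 'rV[R]_d) (t : 'rV[R]_d) :
  dotp (\sum_(i < n) a i *: y i) t = \sum_(i < n) a i * dotp (y i) t.
Proof.
rewrite /dotp; transitivity (\sum_(i < d) \sum_(j < n) a j * (y j 0 i * t 0 i)).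
  apply: eq_bigr => i _; rewrite summxE mulr_suml; apply: eq_bigr => j _.
  by rewrite mxE mulrA.
by rewrite exchange_big; apply: eq_bigr => j _; rewrite mulr_sumr.
Qed.

Lemma dotpZl d (c : R) (u t : 'rV[R]_d) : dotp (c *: u) t = c * dotp u t.
Proof. by rewrite /dotp mulr_sumr; apply: eq_bigr => i _; rewrite mxE mulrA. Qed.

Lemma dotpC d (u t : 'rV[R]_d) : dotp u t = dotp t u.
Proof. by rewrite /dotp; apply: eq_bigr => i _; rewrite mulrC. Qed.

Lemma is_derive_lnaff (c b : R) : 0 < c ->
  is_derive (0:R) 1 (fun h : R => ln (c + h * b)) (c^-1 * b).
Proof.
move=> c0.
have hg : is_derive (0:R) 1 (fun h : R => c + h * b) b.
  have -> : (fun h : R => c + h * b) = cst c + b \*: (@id R).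
    by apply/funext => h /=; rewrite mulrC.
  have H : is_derive (0:R) 1 (cst c + b \*: (@id R)) (0 + b *: 1) by apply: is_deriveD.
  by rewrite add0r [b *: 1]mulr1 in H.
have -> : (fun h : R => ln (c + h * b)) = (@ln R) \o (fun h : R => c + h * b) by [].
apply: is_derive1_comp.
rewrite mul0r addr0; exact: is_derive1_ln.
Qed.

Lemma fermat0 (q : R -> R) :
  derivable q 0 1 -> (\forall h \near 0, q h <= q 0) -> 'D_1 q 0 = 0.
Proof.
move=> dq qmax.
set Q := (fun h : R => h^-1 *: ((q \o shift 0) (h *: 1) - q 0)).
have QE : forall h, Q h = h^-1 * (q h - q 0).
  by move=> h; rewrite /Q /= addr0 scaler1.
apply/eqP; rewrite eq_le; apply/andP; split.
  rewrite /derive (cvg_at_rightE Q) //.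
  apply: limr_le; first by apply/cvg_ex; eexists; exact: (cvg_dnbhs_at_right dq).
  near=> h; rewrite QE; apply: mulr_ge0_le0.
    by rewrite invr_ge0; apply: ltW; near: h; exact: nbhs_right_gt.
  rewrite subr_le0; near: h; rewrite /at_right /at_left /within; move: qmax; apply: filterS => h' hh' _; exact: hh'.
rewrite /derive (cvg_at_leftE Q) //.
apply: limr_ge; first by apply/cvg_ex; eexists; exact: (cvg_dnbhs_at_left dq).
near=> h; rewrite QE; apply: mulr_le0.
  by rewrite invr_le0; apply: ltW; near: h; exact: nbhs_left_lt.
rewrite subr_le0; near: h; rewrite /at_right /at_left /within; move: qmax; apply: filterS => h' hh' _; exact: hh'.
Unshelve. all: by end_near. Qed.

End Aux.

Theorem proposition1 (R : realType) (dX : measure_display) (X : measurableType dX)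
  (nu : {measure set X -> \bar R}) (lam : R) (d n : nat) (F : X -> 'rV[R]_d)
  (xs : 'I_n -> X) (thetahat : 'rV[R]_d) :
  standing_assumptions lam nu F ->
  (0 < n)%N ->
  (forall i, lsupport lam nu F (xs i)) ->
  natparam lam nu F thetahat ->
  (forall t, natparam lam nu F t ->
     loglik lam nu F (fun i => F (xs i)) t <= loglik lam nu F (fun i => F (xs i)) thetahat) ->
  lgrad lam (potential lam nu F) thetahat =
    \sum_(i < n) lweight lam (fun j => F (xs j)) thetahat i *: F (xs i).
Proof.
move=> [lam0 _ oTh [_ [dphi _ _ _ _]]] n0 supp Hth Hmax.
set y := fun j => F (xs j).
set th := thetahat.
set phi := potential lam nu F.
set Th := natparam lam nu F.
have lamne0 : lam != 0 by rewrite lt_eqF.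
have cpos : forall t, Th t -> forall i, 0 < 1 + lam * dotp t (y i).
  move=> t Ht i; rewrite ltNge; apply/negP => hle.
  move: (supp i t Ht); rewrite /ldensity /lkernel.
  by rewrite (max_r hle) powR0 ?invr_eq0 // mul0r ltxx.
set c := fun i => 1 + lam * dotp th (y i).
have c0 : forall i, 0 < c i by move=> i; exact: cpos.
have nearTh : \forall e \near (0 : 'rV[R]_d), Th (th + e).
  rewrite -nbhs0P; move: oTh; rewrite openE => /(_ _ Hth); exact.
have Hk : forall k : 'I_d,
    \sum_(i < n) (c i)^-1 * y i 0 k = n%:R * 'D_(delta_mx 0 k) phi th.
  move=> k; set v : 'rV[R]_d := delta_mx 0 k.
  set q := fun h : R => loglik lam nu F y (h *: v + th).
  have qmax : \forall h \near 0, q h <= q 0.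
    move: (near0Z v nearTh); apply: filterS => h Hh.
    rewrite /q scale0r add0r addrC; exact: Hmax.
    set b := fun i => lam * dotp v (y i).
  set f := fun (i : 'I_n) => (lam^-1 \*: (fun h : R => ln (c i + h * b i))) - (fun h : R => phi (h *: v + th)).
  have qE : q = \sum_(i < n) f i.
    rewrite fct_sumE; apply/funext => h; rewrite /q /loglik; apply: eq_bigr => i _.
    by rewrite /f /c /b dotp_line; congr (_ * ln _ - _); ring.
  have dphiv : is_derive (0:R) 1 (fun h : R => phi (h *: v + th)) ('D_v phi th).
    have [L1 L2] := @line_derive R _ phi th v.
    have dd : differentiable phi th := (dphi th Hth).1.
    have d0 : derivable phi th v := @diff_derivable _ _ _ phi th v dd.
    have d1 : derivable (fun h : R => phi (h *: v + th)) 0 1 := proj1 L1 d0.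
    exact: (DeriveDef d1 (esym L2)).
  have df : forall i, is_derive (0:R) 1 (f i) (lam^-1 *: ((c i)^-1 * b i) - 'D_v phi th).
    move=> i; apply: (is_deriveB _ dphiv).
    exact: (is_deriveZ _ (@is_derive_lnaff R (c i) (b i) (c0 i))).
  have dq : is_derive (0:R) 1 q (\sum_(i < n) (lam^-1 *: ((c i)^-1 * b i) - 'D_v phi th)).
    by rewrite qE; apply: is_derive_sum.
  have := @fermat0 R q (@ex_derive _ _ _ _ _ _ _ dq) qmax.
  rewrite (@derive_val _ _ _ _ _ _ _ dq) => /eqP; rewrite sumrB subr_eq0 => /eqP E.
  move: E; rewrite sumr_const card_ord => E; rewrite mulr_natl -E.
  apply: eq_bigr => i _; rewrite /b /v dotp_delta /y.
  rewrite /GRing.scale /=.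
  by rewrite [RHS]mulrCA mulKf.
set G := grad phi th.
have HG : n%:R *: G = \sum_(i < n) (c i)^-1 *: y i.
  apply/rowP => k; rewrite summxE !mxE -Hk; apply: eq_bigr => i _; rewrite mxE.
  by [].
set S := \sum_(i < n) (c i)^-1.
have nne0 : (n%:R : R) != 0 by rewrite pnatr_eq0 -lt0n.
have HD : n%:R * (1 - lam * dotp G th) = S.
  rewrite mulrBr mulr1 mulrCA -dotpZl HG dotp_suml mulr_sumr.
  have -> : \sum_(i < n) lam * ((c i)^-1 * dotp (y i) th) = \sum_(i < n) (1 - (c i)^-1).
    apply: eq_bigr => i _; rewrite dotpC.
    have cE : lam * dotp th (y i) = c i - 1 by rewrite /c; ring.
    by rewrite mulrCA cE mulrBr mulVf ?mulr1 // gt_eqF.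
  by rewrite sumrB sumr_const card_ord /S; ring.
rewrite /lgrad -/phi -/G.
transitivity (\sum_(i < n) ((c i)^-1 / S) *: y i); last by [].
under eq_bigr do rewrite mulrC -scalerA.
rewrite -scaler_sumr -HG scalerA; congr (_ *: _).
by rewrite -HD invfM mulrAC mulVf ?mul1r.
Qed.
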